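(* Let $X\sim F$ be a real random variable with $P_F(a\le|X|\le b)=1$, where $0<a<b<\infty$, and let $\sigma^2=\sigma^2(F)=\mathrm{Var}_F(X)$. Let $$K^2=\frac{4}{\big(\frac ba+\frac ab\big)^2}$$ (with $K>0$), and let $\alpha$ satisfy $1-K^2<\alpha<1$. Then, with $c^2 = 1-\frac{\sqrt{1-\alpha}}{K}$ (which lies in $(0,1)$), $$P_F\Big(\sigma^2\le\frac{X^2}{c^2}\Big)\ge1-\alpha.$$ *)

(* Defs.v *)
From HB Require Import structures.
From mathcomp Require Export all_boot all_order all_algebra.
From mathcomp Require Export all_classical all_reals all_analysis.
Set Implicit Arguments. Unset Strict Implicit. Unset Printing Implicit Defensive.
Import Order.TTheory GRing.Theory Num.Theory.
Local Open Scope ring_scope.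

Definition Ksq {R : realType} (a b : R) : R := 4 / (b / a + a / b) ^+ 2.
Definition Kc {R : realType} (a b : R) : R := Num.sqrt (Ksq a b).
Definition csq {R : realType} (a b alpha : R) : R :=
  1 - Num.sqrt (1 - alpha) / Kc a b.

(* Main.v *)
Require Import Defs.
From mathcomp Require Import all_boot all_order all_algebra.
From mathcomp Require Import all_classical all_reals all_analysis.
From mathcomp Require Import ring lra.
Import Order.TTheory GRing.Theory Num.Theory.
Local Open Scope ring_scope.
Local Open Scope classical_set_scope.


Lemma Ksq_E {R : realType} (a b : R) : 0 < a -> 0 < b ->
  Ksq a b = 4 * (a ^+ 2 * b ^+ 2) / (a ^+ 2 + b ^+ 2) ^+ 2.
Proof.
move=> a0 b0; rewrite /Ksq.
have h : a ^+ 2 + b ^+ 2 != 0 by rewrite gt_eqF // addr_gt0 // exprn_gt0.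
have an : a != 0 by rewrite gt_eqF.
have bn : b != 0 by rewrite gt_eqF.
by field; rewrite h an bn.
Qed.

Lemma pt_ineq {R : realType} (u v y lam thM : R) : 0 < lam -> u <= y -> y <= v ->
  0 <= thM -> (thM < y) ->
  y + lam * (u * v) / 2 <= lam * (u + v) / 2 * y + 1 / (2 * lam) + thM.
Proof.
move=> l0 uy yv t0 ty.
have e : lam * y ^+ 2 / 2 + 1 / (2 * lam) - y = (lam * y - 1) ^+ 2 * (1 / (2 * lam)).
  by field; rewrite gt_eqF.
have h1 : 0 <= (lam * y - 1) ^+ 2 * (1 / (2 * lam)).
  by apply: mulr_ge0; [exact: sqr_ge0| apply: divr_ge0 => //; apply: mulr_ge0 => //; exact: ltW].
have h2 : 0 <= lam * ((y - u) * (v - y)) by apply: mulr_ge0; [exact: ltW| apply: mulr_ge0; rewrite subr_ge0].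
nra.
Qed.

Lemma pt_ineq2 {R : realType} (u v y lam thM : R) : 0 < lam -> u <= y -> y <= v ->
  0 <= u -> (y <= thM) ->
  y + lam * (u * v) / 2 <= lam * (u + v) / 2 * y + thM.
Proof.
move=> l0 uy yv u0 ty.
have h2 : 0 <= lam * ((y - u) * (v - y)) by apply: mulr_ge0; [exact: ltW| apply: mulr_ge0; rewrite subr_ge0].
have h3 : 0 <= lam * (y * y) by apply: mulr_ge0; [exact: ltW| apply: mulr_ge0; exact: (le_trans u0)].
nra.
Qed.

Lemma fin_alg {R : realType} (u v M th p : R) : 0 < u -> u <= M -> M <= v -> th < 1 ->
  forall lam, lam = (1 - th) * M / ((u + v) * M - u * v) ->
  M + lam * (u * v) / 2 <= lam * (u + v) / 2 * M + 1 / (2 * lam) * p + th * M ->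
  (1 - th) ^+ 2 * (4 * (u * v) / (u + v) ^+ 2) <= p.
Proof.
move=> u0 uM Mv th1 lam0 -> H.
set s := (u + v) * M - u * v in H.
set lam := (1 - th) * M / s in H.
have M0 : 0 < M by apply: lt_le_trans uM.
have s0 : 0 < s.
  have : 0 <= (M - u) * (v - M) by apply: mulr_ge0; rewrite subr_ge0.
  rewrite /s; nra.
have t0 : 0 < 1 - th by rewrite subr_gt0.
have l0 : 0 < lam by rewrite /lam divr_gt0 // mulr_gt0.
have hls : lam * ((u + v) * M - u * v) = (1 - th) * M.
  by rewrite /lam -/s; field; rewrite gt_eqF.
set q := 1 / (2 * lam) * p in H.
have hq : (1 - th) * M / 2 <= q by nra.
have hp : p = (2 * lam) * q by rewrite /q; field; rewrite gt_eqF.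
have hp2 : lam * ((1 - th) * M) <= p.
  rewrite hp; have : 0 <= lam * (q - (1 - th) * M / 2) by apply: mulr_ge0; [exact: ltW| rewrite subr_ge0].
  nra.
have e : lam * ((1 - th) * M) = (1 - th) ^+ 2 * (M ^+ 2 / s).
  by rewrite /lam; field; rewrite gt_eqF.
apply: le_trans hp2; rewrite e; apply: ler_wpM2l; first exact: sqr_ge0.
have uv0 : 0 < (u + v) ^+ 2 by rewrite exprn_gt0 // addr_gt0 // (lt_le_trans u0 (le_trans uM Mv)).
rewrite ler_pdivrMr // mulrAC ler_pdivlMr //.
have : 0 <= ((u + v) * M - 2 * (u * v)) ^+ 2 by exact: sqr_ge0.
rewrite /s; nra.
Qed.

Theorem theorem4p1 (d : measure_display) (T : measurableType d) (R : realType)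
  (P : probability T R) (X : {RV P >-> R}) (a b alpha : R) :
  0 < a -> a < b ->
  P [set w | a <= `|X w| <= b] = 1%E ->
  1 - Ksq a b < alpha -> alpha < 1 ->
  (P [set w | ('V_P[X] <= ((X w) ^+ 2 / csq a b alpha)%:E)%E]
     >= (1 - alpha)%:E)%E.
Proof.
move=> a0 ab PS alphaK alpha1.
have b0 : 0 < b by apply: lt_trans ab.
pose u := a ^+ 2; pose v := b ^+ 2.
have u0 : 0 < u by rewrite exprn_gt0.
have uv : u < v by rewrite /u /v !expr2; nra.
have mX : measurable_fun setT (X : T -> R) by exact: measurable_funPT.
pose S := [set w | a <= `|X w| <= b].
have mS : measurable S.
  have mnX : measurable_fun setT (fun w => `|X w|) by exact: measurableT_comp.
  have := mnX measurableT `[a, b]%classic (measurable_itv _).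
  rewrite setTI; congr measurable; apply/seteqP; split => w /=; by rewrite in_itv.
have aeS : \forall w \ae P, S w.
  exists (~` S); split => //; first exact: measurableC.
  by rewrite probability_setC // PS subee.
have ae_of : forall Q : T -> Prop, (forall w, S w -> Q w) -> \forall w \ae P, Q w.
  by move=> Q h; apply: filterS aeS.
have X2 : (X : T -> R) \in Lfun P 2%:E.
  apply: (@Lfun_subset _ _ _ P 2%:E +oo%E).
  - by rewrite lee_fin ler1n.
  - exact: leey.
  - first [exact: (fin_num_measure P _ measurableT) | exact: (fin_num_measure _ _ measurableT) | rewrite ge0_fin_numE // (le_lt_trans (probability_le1 P measurableT)) // ltry].
  - exact: leey.
  - rewrite inE; apply/andP; split; rewrite inE/=; first exact: mX.
    rewrite /finite_norm unlock /Lnorm; case: ifP => _; last exact: ltry.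
    apply: (@le_lt_trans _ _ b%:E); last exact: ltry.
    apply/ess_sup_inf.ess_supP; apply: ae_of => w /andP[_ h] /=.
    by rewrite lee_fin.
pose Y := fun w => X w ^+ 2.
have mY : measurable_fun setT Y by exact: measurable_realfun.measurable_funX.
have Y0 : forall w, 0 <= Y w by move=> w; exact: sqr_ge0.
have Y1 : Y \in Lfun P 1 by apply/Lfun1_integrable; exact: Lfun2_integrable_sqr.
have Ybnd : forall w, S w -> u <= Y w <= v.
  move=> w /andP[h1 h2]; rewrite /Y /u /v -(real_normK (num_real (X w))).
  have := normr_ge0 (X w); move=> n0; apply/andP; split; nra.
have hEu : (u%:E <= (expectation P Y))%E.
  rewrite -(expectation_cst P u); apply: expectation_le => //.
  - by move=> _ /=; exact: ltW.
  - by apply: ae_of => w /Ybnd /andP[].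
have hEv : ((expectation P Y) <= v%:E)%E.
  rewrite -(expectation_cst P v); apply: expectation_le => //.
  - by move=> _ /=; apply: ltW; exact: lt_trans uv.
  - by apply: ae_of => w /Ybnd /andP[].
pose M := fine (expectation P Y).
have EM : (expectation P Y) = M%:E.
  rewrite fineK // ge0_fin_numE; first exact: (le_lt_trans hEv (ltry _)).
  by apply: le_trans hEu; rewrite lee_fin ltW.
have uM : u <= M by rewrite -lee_fin -EM.
have Mv : M <= v by rewrite -lee_fin -EM.
have Pfin : P [set: T] \is a fin_num.
  first [exact: (fin_num_measure P _ measurableT) | exact: (fin_num_measure _ _ measurableT) | rewrite ge0_fin_numE // (le_lt_trans (probability_le1 P measurableT)) // ltry].
have X1 : (X : T -> R) \in Lfun P 1 by exact: (Lfun_subset12 Pfin).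
pose m1 := fine (expectation P X).
have Em1 : expectation P X = m1%:E by rewrite fineK // expectation_fin_num.
have VE : variance P X = (M - m1 ^+ 2)%:E.
  rewrite varianceE //.
  have -> : ((X : T -> R) ^+ 2) = Y by rewrite exprfctE.
  by rewrite EM Em1 -EFin_expe -EFinB.
pose th := csq a b alpha.
have Kpos : 0 < Ksq a b.
  rewrite Ksq_E // divr_gt0 //; last by rewrite exprn_gt0 // addr_gt0 // exprn_gt0.
  by rewrite mulr_gt0 // mulr_gt0 // exprn_gt0.
have Kc0 : 0 < Kc a b by rewrite /Kc sqrtr_gt0.
have al0 : 0 < 1 - alpha by rewrite subr_gt0.
have tE : 1 - th = Num.sqrt (1 - alpha) / Kc a b by rewrite /th /csq; ring.
have t0 : 0 < 1 - th by rewrite tE divr_gt0 // sqrtr_gt0.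
have t1 : 1 - th < 1.
  rewrite tE ltr_pdivrMr // mul1r /Kc ltr_sqrt //; lra.
have th0 : 0 < th by lra.
have tK : (1 - th) ^+ 2 * Ksq a b = 1 - alpha.
  rewrite tE expr_div_n sqr_sqrtr ?ltW // /Kc sqr_sqrtr ?ltW //.
  by field; rewrite gt_eqF.
pose A := [set w | th * M < Y w].
have mA : measurable A.
  have := mY measurableT `]th * M, +oo[%classic (measurable_itv _).
  rewrite setTI; congr measurable; apply/seteqP; split => w /=; by rewrite in_itv /= andbT.
pose p := fine (P A).
have PA : P A = p%:E.
  rewrite fineK //.
  first [exact: (fin_num_measure P _ mA) | exact: (fin_num_measure _ _ mA) | rewrite ge0_fin_numE // (le_lt_trans (probability_le1 P mA)) // ltry].
have M0 : 0 < M by apply: lt_le_trans uM.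
pose s := (u + v) * M - u * v.
have s0 : 0 < s.
  have : 0 <= (M - u) * (v - M) by apply: mulr_ge0; rewrite subr_ge0.
  rewrite /s; nra.
pose lam := (1 - th) * M / s.
have l0 : 0 < lam by rewrite /lam divr_gt0 // mulr_gt0.
have v0 : 0 < v by exact: lt_trans uv.
have c10 : 0 <= lam * (u * v) / 2.
  by apply/ltW; apply: divr_gt0 => //; apply: mulr_gt0 => //; exact: mulr_gt0.
have k0 : 0 <= lam * (u + v) / 2.
  by apply/ltW; apply: divr_gt0 => //; apply: mulr_gt0 => //; exact: addr_gt0.
have c20 : 0 <= 1 / (2 * lam) by apply: divr_ge0 => //; apply: mulr_ge0 => //; exact: ltW.
have c30 : 0 <= th * M by apply: mulr_ge0; exact: ltW.
have key : (expectation P (Y \+ cst (lam * (u * v) / 2))%R <=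
    expectation P ((lam * (u + v) / 2) \o* Y \+ (1 / (2 * lam)) \o* (\1_A : T -> R) \+ cst (th * M))%R)%E.
  apply: expectation_le.
  - exact: measurable_realfun.measurable_funD mY (measurable_cst _).
  - apply: measurable_realfun.measurable_funD; last exact: measurable_cst.
    apply: measurable_realfun.measurable_funD.
    + exact: (measurable_realfun.measurable_funM mY (measurable_cst _)).
    + apply: (measurable_realfun.measurable_funM _ (measurable_cst _)).
      exact: measurable_realfun.measurable_indic.
  - by move=> w /=; apply: addr_ge0.
  - move=> w /=; apply: addr_ge0 => //.
    apply: addr_ge0; apply: mulr_ge0 => //.
  - apply: ae_of => w /Ybnd /andP[h1 h2] /=.
    rewrite indicE [Y w * _]mulrC; have [wA|wA] := boolP (w \in A).
    + rewrite mul1r; apply: pt_ineq => //.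
      by rewrite inE in wA.
    + rewrite mul0r addr0; apply: pt_ineq2 => //; first exact: ltW.
      by rewrite leNgt; apply: contra wA => h; rewrite inE.
have I1 : (\1_A : T -> R) \in Lfun P 1 by apply/Lfun1_integrable; exact: integrable_indic.
have C1 : forall c, cst c \in Lfun P 1 by move=> c; exact: Lfun_cst.
have S1 : forall c (f : T -> R), f \in Lfun P 1 -> c \o* f \in Lfun P 1.
  by move=> c f hf; apply: Lfun_scale.
rewrite expectationD in key; [|exact: Y1|exact: C1].
rewrite expectationD in key; [|exact: rpredD (S1 _ _ Y1) (S1 _ _ I1)|exact: C1].
rewrite expectationD in key; [|exact: S1 _ _ Y1|exact: S1 _ _ I1].
rewrite !expectation_cst in key.
rewrite expectationZl in key; last exact: Y1.
rewrite expectationZl in key; last exact: I1.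
rewrite expectation_indic // EM PA in key.
rewrite -!EFinM -!EFinD lee_fin in key.
have hp : 1 - alpha <= p.
  have th1 : th < 1 by lra.
  rewrite -tK Ksq_E //; move: key.
  exact: (@fin_alg _ u v M th p u0 uM Mv th1 lam erefl).
have sub : A `<=` [set w | ((M - m1 ^+ 2)%:E <= (X w ^+ 2 / th)%:E)%E].
  move=> w /= hw; rewrite lee_fin.
  have : M <= Y w / th by rewrite ler_pdivlMr // mulrC ltW.
  have := sqr_ge0 m1; rewrite /Y; lra.
have mB : measurable [set w | ((M - m1 ^+ 2)%:E <= (X w ^+ 2 / th)%:E)%E].
  rewrite -[X in measurable X]setTI; apply: measurable_lee => //.
  apply/measurable_realfun.measurable_EFinP.
  exact: (measurable_realfun.measurable_funM mY (measurable_cst _)).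
rewrite VE; apply: (le_trans _ (le_measure P (mem_set mA) (mem_set mB) sub)).
apply: (@le_trans _ _ p%:E); first by rewrite lee_fin.
by rewrite -PA.
Qed.
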